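(* For any class $\mathcal{C}$ of functions $\{\pm1\}^d\to\{\pm1\}$, any $\mathcal{V}\subseteq2^{[d]}$, any $\varepsilon>0$ and any $n,m\in\mathbb{N}$ with $nm\varepsilon\ge2$, $$\delta_{\mathrm{gen}}(\mathcal{C},\mathcal{V},n,m,\varepsilon)\ \le\ 2\,\Pi_{\mathcal{C},\mathcal{V}}(n,2m)\,\exp(-nm\varepsilon/10).$$
   Context: For $f:\{\pm1\}^d\to\{\pm1\}$, $\mathrm{Rel}(f)=\{j\in[d]:\exists v\in\{\pm1\}^d,\ f(v|_{v_j=+1})\neq f(v|_{v_j=-1})\}$, where $v|_{v_j=b}$ is $v$ with coordinate $j$ set to $b$. For distributions $D^{(1)},\dots,D^{(n)}$ over $\{\pm1\}^d\times\{\pm1\}$, $\delta_{\mathrm{gen}}(\mathcal{C},\mathcal{V},n,m,\varepsilon,D^{(1)},\dots,D^{(n)})$ is the probability, over independent samples $S^{(i)}\sim(D^{(i)})^m$, $i\in[n]$, that there exist $h^{(1)},\dots,h^{(n)}\in\mathcal{C}$ with $\bigcup_i\mathrm{Rel}(h^{(i)})\in\mathcal{V}$ such that $\frac{1}{nm}\sum_{i}\sum_{(x,y)\in S^{(i)}}\mathbf{1}[h^{(i)}(x)\neq y]\le\varepsilon$ but $\frac1n\sum_i\Pr_{(x,y)\sim D^{(i)}}[h^{(i)}(x)\neq y]\ge4\varepsilon$. Then $\delta_{\mathrm{gen}}(\mathcal{C},\mathcal{V},n,m,\varepsilon)$ is the supremum over all $D^{(1)},\dots,D^{(n)}$. Multitask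 shattering number: for a sample $S=(x_1,\dots,x_m)$ write $f(S)=(f(x_1),\dots,f(x_m))$; $\Pi_{\mathcal{C},\mathcal{V}}(n,m)$ is the maximum over $S^{(1)},\dots,S^{(n)}\in(\{\pm1\}^d)^m$ of the number of distinct tuples $(f^{(1)}(S^{(1)}),\dots,f^{(n)}(S^{(n)}))$ with $f^{(1)},\dots,f^{(n)}\in\mathcal{C}$ and $\bigcup_i\mathrm{Rel}(f^{(i)})\in\mathcal{V}$. *)

(* Defs.v *)
From HB Require Import structures.
From mathcomp Require Import all_boot all_order all_algebra.
From mathcomp Require Import all_classical all_reals.
From mathcomp.analysis Require Import sequences exp.

Import Order.TTheory GRing.Theory Num.Theory.
Local Open Scope ring_scope.

(* Convention: {+1,-1} is encoded by bool, true = +1, false = -1. *)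
Definition point (d : nat) := {ffun 'I_d -> bool}.
Definition hyp (d : nat) := {ffun point d -> bool}.
Definition labeled (d : nat) := (point d * bool)%type.

Definition setcoord d (v : point d) (j : 'I_d) (b : bool) : point d :=
  [ffun k => if k == j then b else v k].

Definition Rel d (f : hyp d) : {set 'I_d} :=
  [set j | [exists v : point d, f (setcoord d v j true) != f (setcoord d v j false)]].

Definition admissible d (C : {set hyp d}) (V : {set {set 'I_d}}) n
    (h : {ffun 'I_n -> hyp d}) : bool :=
  [forall i, h i \in C] && ((\bigcup_(i < n) Rel d (h i)) \in V).

Definition is_dist (R : realType) d (D : {ffun labeled d -> R}) : Prop :=
  (forall z, 0 <= D z) /\ \sum_z D z = 1.

Definition bad_event (R : realType) d (C : {set hyp d}) (V : {set {set 'I_d}})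
    n m (eps : R) (D : 'I_n -> {ffun labeled d -> R})
    (S : {ffun 'I_n -> {ffun 'I_m -> labeled d}}) : bool :=
  [exists h : {ffun 'I_n -> hyp d},
     [&& admissible d C V n h,
         (n * m)%:R^-1 * (\sum_(i < n) \sum_(j < m)
            ((h i (S i j).1 != (S i j).2) : nat)%:R) <= eps &
         4 * eps <= n%:R^-1 *
            (\sum_(i < n) \sum_(z : labeled d | h i z.1 != z.2) D i z)]].

Definition delta_gen_D (R : realType) d (C : {set hyp d}) (V : {set {set 'I_d}})
    n m (eps : R) (D : 'I_n -> {ffun labeled d -> R}) : R :=
  \sum_(S : {ffun 'I_n -> {ffun 'I_m -> labeled d}} | bad_event R d C V n m eps D S)
     \prod_(i < n) \prod_(j < m) D i (S i j).

Definition delta_gen (R : realType) d (C : {set hyp d}) (V : {set {set 'I_d}})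
    n m (eps : R) : R :=
  sup [set delta_gen_D R d C V n m eps D | D in
         [set D : 'I_n -> {ffun labeled d -> R} | forall i, is_dist R d (D i)]]%classic.

Definition shatter d (C : {set hyp d}) (V : {set {set 'I_d}}) n m : nat :=
  \max_(S : {ffun 'I_n -> {ffun 'I_m -> point d}})
    #|[set ([ffun i => [ffun j => h i (S i j)]] : {ffun 'I_n -> {ffun 'I_m -> bool}})
        | h : {ffun 'I_n -> hyp d} in [set h | admissible d C V n h]]|.

(* Main.v *)
Require Import Defs.
From HB Require Import structures.
From mathcomp Require Import all_boot all_order all_algebra.
From mathcomp Require Import all_classical all_reals.
From mathcomp.analysis Require Import sequences exp.
From mathcomp Require Import lra.
Import Order.TTheory GRing.Theory Num.Theory.
Local Open Scope ring_scope.

Lemma sum_prod2 (R : realType) (I J T : finType) (F : I -> J -> T -> R) :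
  \sum_(s : {ffun I -> {ffun J -> T}}) \prod_i \prod_j F i j (s i j)
  = \prod_i \prod_j \sum_t F i j t.
Proof.
rewrite (eq_bigr (fun i => \sum_(g : {ffun J -> T}) \prod_j F i j (g j))).
  by rewrite bigA_distr_bigA.
by move=> i _; rewrite bigA_distr_bigA.
Qed.

Lemma ln2_le1 (R : realType) : ln (2 : R) <= 1.
Proof. by have := @le_ln1Dx R 1; rewrite -[1+1]/2; apply; lra. Qed.

Lemma expR4 (R : realType) : 32 <= expR (4 : R).
Proof.
have a1 : 5/4 <= expR (1/4 : R) by have := expR_ge1Dx (1/4 : R); lra.
have -> : (4 : R) = 16%:R * (1/4) by rewrite -[16%:R]/16; lra.
rewrite expRM_natl.
have : (5/4 : R) ^+ 16 <= expR (1/4) ^+16.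
  by rewrite lerXn2r // ?nnegrE; lra.
suff : 32 <= (5/4 : R) ^+ 16 by lra.
rewrite !exprS expr0; lra.
Qed.

Lemma num1 (R : realType) : expR (4 * ln 2 - 4 : R) <= 1/2.
Proof.
rewrite expRD.
rewrite expRM_natl lnK ?posrE //.
have h1 := expR4 R.
have h2 := expRxMexpNx_1 (4 : R).
have h3 := expR_gt0 (- 4 : R).
rewrite !exprS expr0.
nra.
Qed.

Lemma num2 (R : realType) : (1/10 : R) <= ln (32/27).
Proof.
rewrite -ler_expR lnK ?posrE; last lra.
have h1 := expR_ge1Dx (- (1/10) : R).
have h2 := expRxMexpNx_1 (1/10 : R).
have h3 := expR_gt0 (1/10 : R).
nra.
Qed.
Definition XS (n m : nat) (R : realType) (e1 e2 : 'I_n -> 'I_m -> bool)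
   (s : {ffun 'I_n -> {ffun 'I_m -> bool}}) : R :=
  \sum_(i < n) \sum_(j < m) ((if s i j then e2 i j else e1 i j) : nat)%:R.

Arguments XS {n m R}.

Lemma sum_sigma1 (R : realType) n m :
  \sum_(s : {ffun 'I_n -> {ffun 'I_m -> bool}}) (1 : R) = \prod_(i < n) \prod_(j < m) 2.
Proof.
transitivity (\sum_(s : {ffun 'I_n -> {ffun 'I_m -> bool}}) \prod_(i < n) \prod_(j < m) (1 : R)).
  by apply: eq_bigr => s _; rewrite big1 // => i _; rewrite big1.
rewrite (@sum_prod2 R _ _ _ (fun i j b => 1)).
by apply: eq_bigr => i _; apply: eq_bigr => j _; rewrite big_bool.
Qed.

Lemma pattern_bound (R : realType) n m (e1 e2 : 'I_n -> 'I_m -> bool) (k : R) :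
  0 <= k ->
  \sum_(s : {ffun 'I_n -> {ffun 'I_m -> bool}})
     (((XS e1 e2 s <= k) && (2 * k <= XS e2 e1 s))%R : nat)%:R
  <= (\sum_(s : {ffun 'I_n -> {ffun 'I_m -> bool}}) (1 : R)) * expR (- (k / 10)).
Proof.
move=> k0.
set la := ln (2/3 : R); set lb := ln (4/3 : R).
have ea : expR la = 2/3 by rewrite lnK // posrE; lra.
have eb : expR lb = 4/3 by rewrite lnK // posrE; lra.
have la0 : la <= 0 by rewrite /la ln_le0 //; lra.
have lb0 : 0 <= lb by rewrite /lb ln_ge0 //; lra.
pose f (i : 'I_n) (j : 'I_m) (b : bool) : R :=
  expR (la * ((if b then e2 i j else e1 i j) : nat)%:R
        + lb * ((if b then e1 i j else e2 i j) : nat)%:R).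
set B := expR (- (la * k + lb * (2 * k))).
have pw : forall s : {ffun 'I_n -> {ffun 'I_m -> bool}},
    (((XS e1 e2 s <= k) && (2 * k <= XS e2 e1 s))%R : nat)%:R
    <= B * \prod_i \prod_j f i j (s i j).
  move=> s.
  have -> : \prod_i \prod_j f i j (s i j) = expR (la * XS e1 e2 s + lb * XS e2 e1 s).
    rewrite /XS !mulr_sumr -big_split expR_sum; apply: eq_bigr => i _.
    rewrite !mulr_sumr -big_split expR_sum; apply: eq_bigr => j _.
    by rewrite /f; case: (s i j).
  rewrite /B -expRD.
  case: andP => [[H1 H2]|_]; last exact: expR_ge0.
  rewrite /=; apply: le_trans (expR_ge1Dx _).
  have h1 : 0 <= k - XS e1 e2 s by rewrite subr_ge0.
  have h2 : 0 <= XS e2 e1 s - 2 * k by rewrite subr_ge0.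
  have := mulr_le0_ge0 la0 h1; have := mulr_ge0 lb0 h2; nra.
apply: (@le_trans _ _ (\sum_(s : {ffun 'I_n -> {ffun 'I_m -> bool}}) B * \prod_i \prod_j f i j (s i j))).
  by apply: ler_sum => s _; exact: pw.
rewrite -mulr_sumr (@sum_prod2 R _ _ _ f) sum_sigma1 mulrC.
apply: ler_pM.
- by apply: prodr_ge0 => i _; apply: prodr_ge0 => j _; rewrite big_bool; apply: addr_ge0; exact: expR_ge0.
- exact: expR_ge0.
- apply: ler_prod => i _; apply/andP; split.
    by apply: prodr_ge0 => j _; rewrite big_bool; apply: addr_ge0; exact: expR_ge0.
  apply: ler_prod => j _; apply/andP; split.
    by rewrite big_bool; apply: addr_ge0; exact: expR_ge0.
  rewrite big_bool /f /=.
  case: (e1 i j); case: (e2 i j); rewrite /= ?mulr1 ?mulr0 ?addr0 ?add0r ?expR0 ?ea ?eb; try lra.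
  rewrite expRD ea eb; lra.
- rewrite /B ler_expR.
  have : 1/10 <= la + 2 * lb.
    have -> : la + 2 * lb = ln (32/27 : R).
      have -> : la + 2 * lb = la + lb + lb by lra.
      rewrite /la /lb -!lnM ?posrE //; try lra.
      by congr ln; lra.
    exact: num2.
  nra.
Qed.
Section Main.
Variables (R : realType) (d n m : nat) (D : 'I_n -> {ffun labeled d -> R}).
Hypothesis Dd : forall i, is_dist R d (D i).
Local Notation Om := {ffun 'I_n -> {ffun 'I_m -> labeled d}}.
Definition PS (S : Om) : R := \prod_i \prod_j D i (S i j).
Definition errR (h : {ffun 'I_n -> hyp d}) (S : Om) : R :=
  \sum_(i < n) \sum_(j < m) ((h i (S i j).1 != (S i j).2) : nat)%:R.
Definition qq (f : hyp d) i := \sum_(z : labeled d | f z.1 != z.2) D i z.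

Lemma PS_ge0 S : 0 <= PS S.
Proof. by apply: prodr_ge0 => i _; apply: prodr_ge0 => j _; case: (Dd i). Qed.

Lemma sum_PS : \sum_S PS S = 1.
Proof.
rewrite /PS (@sum_prod2 R _ _ _ (fun i j z => D i z)) big1 // => i _; rewrite big1 // => j _; by case: (Dd i).
Qed.

Lemma chernoff (h : {ffun 'I_n -> hyp d}) (k : R) : 2 <= k ->
  4 * k <= m%:R * \sum_i qq (h i) i ->
  \sum_S PS S * ((errR h S < 2 * k)%R : nat)%:R <= 1/2.
Proof.
move=> k2 hq.
set c := ln (2 : R).
have c0 : 0 < c by rewrite /c ln_gt0 //; lra.
have c1 : c <= 1 := ln2_le1 R.
pose g i (z : labeled d) := expR (- c * ((h i z.1 != z.2) : nat)%:R).
have stepa : forall S, ((errR h S < 2 * k)%R : nat)%:R <=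
    expR (c * (2 * k)) * \prod_i \prod_j g i (S i j).
  move=> S.
  have -> : \prod_i \prod_j g i (S i j) = expR (- c * errR h S).
    rewrite /errR mulr_sumr expR_sum; apply: eq_bigr => i _.
    by rewrite mulr_sumr expR_sum.
  rewrite -expRD; case: ltP => H; last exact: expR_ge0.
  apply: ltW; rewrite expR_gt1; nra.
have stepb : forall i, \sum_z D i z * g i z <= expR (- (qq (h i) i / 2)).
  move=> i; apply: le_trans (expR_ge1Dx _).
  have e2 : expR (- c) = 1/2.
    by rewrite expRN lnK ?posrE // mul1r.
  rewrite (bigID (fun z : labeled d => h i z.1 != z.2)) /=.
  rewrite [X in X + _](eq_bigr (fun z => D i z * (1/2))); last first.
    by move=> z H; rewrite /g H /= mulr1 e2.
  rewrite [X in _ + X](eq_bigr (fun z => D i z)); last first.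
    by move=> z /negbTE H; rewrite /g H /= mulr0 expR0 mulr1.
  rewrite -mulr_suml.
  case: (Dd i) => _ s1.
  move: s1; rewrite (bigID (fun z : labeled d => h i z.1 != z.2)) /= => s1.
  rewrite /qq; lra.
apply: (@le_trans _ _ (\sum_S PS S * (expR (c * (2 * k)) * \prod_i \prod_j g i (S i j)))).
  by apply: ler_sum => S _; apply: ler_wpM2l; [exact: PS_ge0 | exact: stepa].
rewrite (eq_bigr (fun S : Om => expR (c * (2 * k)) * \prod_i \prod_j (D i (S i j) * g i (S i j)))); last first.
  move=> S _; rewrite /PS mulrCA; congr (_ * _).
  by rewrite -big_split /=; apply: eq_bigr => i _; rewrite -big_split.
rewrite -mulr_sumr (@sum_prod2 R _ _ _ (fun i j z => D i z * g i z)).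
apply: (@le_trans _ _ (expR (c * (2 * k)) * \prod_(i < n) \prod_(j < m) expR (- (qq (h i) i / 2)))).
  apply: ler_wpM2l; first exact: expR_ge0.
  apply: ler_prod => i _; apply/andP; split.
    by apply: prodr_ge0 => j _; apply: sumr_ge0 => z _; apply: mulr_ge0; [case: (Dd i)|exact: expR_ge0].
  apply: ler_prod => j _; apply/andP; split; last exact: stepb.
  by apply: sumr_ge0 => z _; apply: mulr_ge0; [case: (Dd i)|exact: expR_ge0].
rewrite -(eq_bigr _ (fun i _ => expR_sum _ _ _)) -expR_sum -expRD.
have -> : \sum_(i < n) \sum_(j < m) - (qq (h i) i / 2) = - (m%:R * \sum_i qq (h i) i / 2).
  rewrite mulr_sumr -sumrN; apply: eq_bigr => i _.
  rewrite sumr_const card_ord -mulr_natl; lra.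
have hs : \sum_i qq (h i) i / 2 = (\sum_i qq (h i) i) / 2 by rewrite mulr_suml.
rewrite hs.
move: hq; set x := _ * \sum_i _ => hq.
have -> : m%:R * ((\sum_i qq (h i) i) / 2) = x / 2 by rewrite /x mulrA.
apply: le_trans (num1 R); rewrite ler_expR -/c.
have : (k - 2) * (c - 1) <= 0 by rewrite mulr_ge0_le0 //; lra.
lra.
Qed.

Variables (C : {set hyp d}) (V : {set {set 'I_d}}) (k : R).

Definition G (S S' : Om) : bool :=
  [exists h : {ffun 'I_n -> hyp d},
    [&& admissible d C V n h, (errR h S <= k)%R & (2 * k <= errR h S')%R]].

Definition sw (s : {ffun 'I_n -> {ffun 'I_m -> bool}}) (S S' : Om) : Om :=
  [ffun i => [ffun j => if s i j then S' i j else S i j]].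

Lemma sw_weight s S S' : PS (sw s S S') * PS (sw s S' S) = PS S * PS S'.
Proof.
rewrite /PS -!big_split /=; apply: eq_bigr => i _; rewrite -!big_split /=.
by apply: eq_bigr => j _; rewrite !ffunE; case: (s i j) => //; rewrite mulrC.
Qed.

Lemma sym_sum (F : Om -> Om -> R) s :
  \sum_S \sum_S' PS S * PS S' * F S S' =
  \sum_S \sum_S' PS S * PS S' * F (sw s S S') (sw s S' S).
Proof.
rewrite !pair_bigA /=.
pose phi (p : Om * Om) := (sw s p.1 p.2, sw s p.2 p.1).
have phiK : involutive phi.
  move=> [S S']; rewrite /phi /=; congr (_, _); apply/ffunP => i; apply/ffunP => j;
  by rewrite !ffunE; case: (s i j).
rewrite (reindex_inj (inv_inj phiK)) /=.
by apply: eq_bigr => p _; rewrite /phi /= sw_weight.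
Qed.

Definition eqm : (2 * m = m + m)%N := etrans (mul2n m) (esym (addnn m)).
Definition lo (j : 'I_m) : 'I_(2 * m) := cast_ord (esym eqm) (lshift m j).
Definition hi (j : 'I_m) : 'I_(2 * m) := cast_ord (esym eqm) (rshift m j).

Definition TT (S S' : Om) : {ffun 'I_n -> {ffun 'I_(2 * m) -> Defs.point d}} :=
  [ffun i => [ffun t : 'I_(2 * m) =>
     match fintype.split (cast_ord eqm t) with inl j => (S i j).1 | inr j => (S' i j).1 end]].

Lemma TT_lo S S' i j : TT S S' i (lo j) = (S i j).1.
Proof.
rewrite !ffunE /lo cast_ordKV.
by have := unsplitK (inl j : 'I_m + 'I_m) => /= ->.
Qed.

Lemma TT_hi S S' i j : TT S S' i (hi j) = (S' i j).1.
Proof.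
rewrite !ffunE /hi cast_ordKV.
by have := unsplitK (inr j : 'I_m + 'I_m) => /= ->.
Qed.

Definition lab S S' (h : {ffun 'I_n -> hyp d}) : {ffun 'I_n -> {ffun 'I_(2 * m) -> bool}} :=
  [ffun i => [ffun j => h i (TT S S' i j)]].

Lemma lab_lo S S' h i j : lab S S' h i (lo j) = h i (S i j).1.
Proof. by rewrite /lab ffunE ffunE TT_lo. Qed.
Lemma lab_hi S S' h i j : lab S S' h i (hi j) = h i (S' i j).1.
Proof. by rewrite /lab ffunE ffunE TT_hi. Qed.

Definition Pat S S' := [set lab S S' h | h in [set h | admissible d C V n h]].

Lemma Pat_card S S' : (#|Pat S S'| <= shatter d C V n (2 * m))%N.
Proof.
rewrite /shatter.
apply: (leq_trans _ (leq_bigmax (TT S S'))).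
by [].
Qed.

Definition e1 (S S' : Om) (q : {ffun 'I_n -> {ffun 'I_(2 * m) -> bool}}) i j :=
  q i (lo j) != (S i j).2.
Definition e2 (S S' : Om) (q : {ffun 'I_n -> {ffun 'I_(2 * m) -> bool}}) i j :=
  q i (hi j) != (S' i j).2.

Lemma XS_err S S' h s :
  XS (e1 S S' (lab S S' h)) (e2 S S' (lab S S' h)) s = errR h (sw s S S') /\
  XS (e2 S S' (lab S S' h)) (e1 S S' (lab S S' h)) s = errR h (sw s S' S).
Proof.
split; apply: eq_bigr => i _; apply: eq_bigr => j _;
  by rewrite /e1 /e2 lab_lo lab_hi !ffunE; case: (s i j).
Qed.

Lemma step3 S S' : 0 <= k ->
  \sum_(s : {ffun 'I_n -> {ffun 'I_m -> bool}}) (G (sw s S S') (sw s S' S) : nat)%:R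
  <= (shatter d C V n (2 * m))%:R *
     ((\sum_(s : {ffun 'I_n -> {ffun 'I_m -> bool}}) (1 : R)) * expR (- (k / 10))).
Proof.
move=> k0.
set Bd := (\sum_(s : {ffun 'I_n -> {ffun 'I_m -> bool}}) (1 : R)) * expR (- (k / 10)).
have Bd0 : 0 <= Bd by apply: mulr_ge0; [apply: sumr_ge0 => ? _; lra | exact: expR_ge0].
pose cnd q (s : {ffun 'I_n -> {ffun 'I_m -> bool}}) :=
  ((XS (e1 S S' q) (e2 S S' q) s <= k) && (2 * k <= XS (e2 S S' q) (e1 S S' q) s))%R.
apply: (@le_trans _ _ (\sum_(s : {ffun 'I_n -> {ffun 'I_m -> bool}})
                        \sum_(q in Pat S S') (cnd q s : nat)%:R)).
  apply: ler_sum => s _.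
  case: (boolP (G (sw s S S') (sw s S' S))) => [/existsP [h /and3P [adm H1 H2]]|_]; last by rewrite /=; apply: sumr_ge0 => q _; rewrite ler0n.
  have hq : lab S S' h \in Pat S S' by apply/imsetP; exists h => //; rewrite inE.
  rewrite (bigD1 _ hq) /=.
  have [E1 E2] := XS_err S S' h s.
  rewrite /cnd E1 E2 H1 H2 /=.
  rewrite lerDl; by apply: sumr_ge0 => q _; rewrite ler0n.
rewrite exchange_big /=.
apply: (@le_trans _ _ (\sum_(q in Pat S S') Bd)).
  by apply: ler_sum => q _; exact: pattern_bound.
rewrite sumr_const -[Bd *+ _]mulr_natl; apply: ler_wpM2r => //.
by rewrite ler_nat Pat_card.
Qed.

Lemma W_bound : 0 <= k ->
  \sum_S \sum_S' PS S * PS S' * (G S S' : nat)%:R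
  <= (shatter d C V n (2 * m))%:R * expR (- (k / 10)).
Proof.
move=> k0.
set Z := \sum_(s : {ffun 'I_n -> {ffun 'I_m -> bool}}) (1 : R).
have Z0 : 0 < Z.
  by rewrite /Z sum_sigma1; apply: prodr_gt0 => i _; apply: prodr_gt0 => j _; lra.
rewrite -(ler_pM2l Z0).
have -> : Z * (\sum_S \sum_S' PS S * PS S' * (G S S' : nat)%:R) =
   \sum_S \sum_S' \sum_(s : {ffun 'I_n -> {ffun 'I_m -> bool}})
      PS S * PS S' * (G (sw s S S') (sw s S' S) : nat)%:R.
  rewrite /Z mulr_suml.
  rewrite (eq_bigr (fun s => \sum_S \sum_S' PS S * PS S' * (G (sw s S S') (sw s S' S) : nat)%:R)); last first.
    by move=> s _; rewrite mul1r (sym_sum (fun S S' => (G S S' : nat)%:R) s).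
  rewrite exchange_big; apply: eq_bigr => S _; by rewrite exchange_big.
apply: (@le_trans _ _ (\sum_(S : Om) \sum_(S' : Om) PS S * PS S' *
          ((shatter d C V n (2 * m))%:R * (Z * expR (- (k / 10)))))).
  apply: ler_sum => S _; apply: ler_sum => S' _.
  rewrite -mulr_sumr; apply: ler_wpM2l; first by apply: mulr_ge0; exact: PS_ge0.
  exact: step3.
rewrite (eq_bigr (fun S => PS S * ((shatter d C V n (2 * m))%:R * (Z * expR (- (k / 10)))))).
  by rewrite -mulr_suml sum_PS mul1r; lra.
by move=> S _; rewrite -mulr_suml -mulr_sumr sum_PS mulr1.
Qed.

Lemma bad_half eps (S : Om) : 0 < eps -> k = (n * m)%:R * eps -> 2 <= k ->
  bad_event R d C V n m eps D S ->
  1/2 <= \sum_S' PS S' * (G S S' : nat)%:R.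
Proof.
move=> e0 hk k2 /existsP [h /and3P [adm Hemp Htrue]].
have nm0 : 0 < (n * m)%:R :> R.
  have : 0 < (n * m)%:R * eps by lra.
  by rewrite pmulr_lgt0.
have Hk : errR h S <= k.
  have -> : errR h S = (n * m)%:R * ((n * m)%:R^-1 * errR h S).
    by rewrite mulrA mulfV ?mul1r // gt_eqF.
  by rewrite hk; apply: ler_wpM2l; [exact: ltW | exact: Hemp].
have n0 : 0 < n%:R :> R.
  by move: nm0; rewrite !ltr0n muln_gt0 => /andP [].
have Hq : 4 * k <= m%:R * \sum_i qq (h i) i.
  move: Htrue; rewrite -/(qq _ _).
  set Q := \sum_i _.
  have eQ : n%:R * (n%:R^-1 * Q) = Q by rewrite mulrA mulfV ?mul1r // gt_eqF.
  move: eQ; set y := n%:R^-1 * Q => eQ Ht.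
  have h1 : n%:R * (4 * eps) <= Q by rewrite -eQ; apply: ler_wpM2l; [exact: ltW|].
  have m0 : 0 <= m%:R :> R by [].
  rewrite hk natrM.
  have := ler_wpM2l m0 h1; nra.
have ch := @chernoff h k k2 Hq.
apply: (@le_trans _ _ (\sum_S' PS S' * (1 - ((errR h S' < 2 * k)%R : nat)%:R))).
  rewrite (eq_bigr (fun S' => PS S' - PS S' * ((errR h S' < 2 * k)%R : nat)%:R)).
    by rewrite sumrB sum_PS; lra.
  by move=> S' _; rewrite mulrBr mulr1.
apply: ler_sum => S' _; apply: ler_wpM2l; first exact: PS_ge0.
case: ltP => H /=; first by rewrite subrr ler0n.
have -> : G S S' by apply/existsP; exists h; rewrite adm Hk H.
by rewrite subr0.
Qed.

Lemma deltaD_bound eps : 0 < eps -> k = (n * m)%:R * eps -> 2 <= k ->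
  delta_gen_D R d C V n m eps D <=
  2 * (shatter d C V n (2 * m))%:R * expR (- (k / 10)).
Proof.
move=> e0 hk k2.
rewrite /delta_gen_D.
set Wt := fun S : Om => PS S * (2 * \sum_S' PS S' * (G S S' : nat)%:R).
apply: (@le_trans _ _ (\sum_(S | bad_event R d C V n m eps D S) Wt S)).
  apply: ler_sum => S bS.
  have := @bad_half eps S e0 hk k2 bS => hh.
  rewrite -[X in X <= _]mulr1; apply: ler_wpM2l; first exact: PS_ge0.
  lra.
apply: (@le_trans _ _ (\sum_S Wt S)).
  rewrite [X in _ <= X](bigID (fun S => bad_event R d C V n m eps D S)) /= lerDl.
  apply: sumr_ge0 => S _; apply: mulr_ge0; first exact: PS_ge0.
  apply: mulr_ge0 => //; apply: sumr_ge0 => S' _; apply: mulr_ge0; [exact: PS_ge0 | exact: ler0n].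
have -> : \sum_S Wt S = 2 * \sum_S \sum_S' PS S * PS S' * (G S S' : nat)%:R.
  rewrite mulr_sumr; apply: eq_bigr => S _.
  rewrite /Wt mulrCA; congr (_ * _); rewrite mulr_sumr; apply: eq_bigr => S' _; by rewrite mulrA.
rewrite -mulrA; apply: ler_wpM2l => //.
apply: W_bound; lra.
Qed.
End Main.

Theorem mainTheorem6 (R : realType) (d : nat) (C : {set hyp d})
    (V : {set {set 'I_d}}) (eps : R) (n m : nat) :
  0 < eps -> 2 <= (n * m)%:R * eps ->
  delta_gen R d C V n m eps <=
    2 * (shatter d C V n (2 * m))%:R * expR (- ((n * m)%:R * eps) / 10).
Proof.
move=> e0 k2.
rewrite /delta_gen.
set A := [set _ | _ in _]%classic.
have rhs0 : 0 <= 2 * (shatter d C V n (2 * m))%:R * expR (- ((n * m)%:R * eps) / 10).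
  by apply: mulr_ge0; [apply: mulr_ge0 | exact: expR_ge0].
case: (pselect (A !=set0)%classic) => [Ane|/nonemptyPn ->]; last by rewrite sup0.
apply: ge_sup => // _ [D HD <-].
rewrite mulNr.
exact: (@deltaD_bound R d n m D HD C V ((n * m)%:R * eps) eps e0 erefl k2).
Qed.
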